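(* Let $q\ge2$ be even and $d\ge q+1$. Let $f$ be a density on $\mathbb{R}^d$ with mode $\boldsymbol\theta$, sufficiently smooth, whose $(q+1)$-st order term of the Taylor expansion around $\boldsymbol\theta$ is of the form $\prod_{i=1}^{q+1}\mathbf a_i^\top(\mathbf x-\boldsymbol\theta)$ with $\mathbf a_1,\ldots,\mathbf a_{q+1}\in\mathbb{R}^d$ linearly independent. Then there is a choice of $\mathrm Q$ for which the asymptotic bias of the kernel mode estimator with elliptic kernel is equal to zero, i.e. $\nabla(\nabla^\top\mathrm Q\nabla)^{q/2}f(\boldsymbol\theta)=\mathbf 0$.
   Context: Setting: $\mathrm A=\{Hf(\boldsymbol\theta)\}^{-1}$ is assumed to exist. For a radial $q$-th order kernel $K(\mathbf x)=G(\|\mathbf x\|)$ and a $d\times d$ matrix $\mathrm P$ with $|\det\mathrm P|=1$, the elliptic kernel is $K_{\mathrm P}(\mathbf x)=K(\mathrm P\mathbf x)$, and $\mathrm Q=\mathrm P^{-1}\mathrm P^{-\top}$ (a symmetric positive definite matrix; choosing $\mathrm Q$ is equivalent to choosing $\mathrm P$). The asymptotic bias of the kernel mode estimator with bandwidth $h_n$ and kernel $K_{\mathrm P}$ is $-\frac{\pi^{d/2}h_n^q}{2^{q-1}\Gamma(\frac{d+q}{2})\Gamma(\frac q2+1)}B_{d,q}(G)\,\mathrm A\,\nabla(\nabla^\top\mathrm Q\nabla)^{q/2}f(\boldsymbol\theta)$, where $B_{d,q}(G)=\int_0^\infty x^{d-1+q}G(x)dx\neq0$; hence it vanishes iff the vector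 $\nabla(\nabla^\top\mathrm Q\nabla)^{q/2}f(\boldsymbol\theta)$ (which depends only on the $(q+1)$-st order Taylor term of $f$ at $\boldsymbol\theta$) is zero. *)

(* Defs.v *)
From HB Require Import structures.
From mathcomp Require Import all_boot all_order all_algebra.
From mathcomp Require Import all_classical all_reals all_analysis.
Set Implicit Arguments. Unset Strict Implicit. Unset Printing Implicit Defensive.
Import Order.TTheory GRing.Theory Num.Theory.
Import numFieldNormedType.Exports.
Local Open Scope ring_scope.

Section Defs.
Variables (R : realType) (d : nat).

Definition stdbasis (i : 'I_d) : 'rV[R]_d := delta_mx 0 i.

Definition iterDir (f : 'rV[R]_d -> R) (vs : seq 'rV[R]_d) : 'rV[R]_d -> R :=
  foldr (fun v g => 'D_v g) f vs.

Definition smooth_upto (f : 'rV[R]_d -> R) (k : nat) : Prop :=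
  (forall vs : seq 'rV[R]_d, (size vs < k)%N -> forall x, differentiable (iterDir f vs) x) /\
  (forall vs : seq 'rV[R]_d, (size vs <= k)%N -> continuous (iterDir f vs)).

Definition ellipticLap (Q : 'M[R]_d) (g : 'rV[R]_d -> R) : 'rV[R]_d -> R :=
  fun x => \sum_(i < d) \sum_(j < d) Q i j * 'D_(stdbasis i) ('D_(stdbasis j) g) x.

Definition QofP (P : 'M[R]_d) : 'M[R]_d := invmx P *m (invmx P)^T.

End Defs.

(* Main.v *)
Require Import Defs.
From HB Require Import structures.
From mathcomp Require Import all_boot all_order all_algebra.
From mathcomp Require Import all_classical all_reals all_analysis.
From mathcomp Require Import ring lra zify.
Set Implicit Arguments. Unset Strict Implicit. Unset Printing Implicit Defensive.
Import Order.TTheory GRing.Theory Num.Theory.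
Import numFieldNormedType.Exports.
Local Open Scope ring_scope.

Section Alg.
Variables (R : realFieldType) (V : lmodType R).

Definition SymF (N : nat) (S : seq V -> R) :=
  forall s1 s2, size s1 = N -> perm_eq s1 s2 -> S s1 = S s2.
Definition LinF (N : nat) (S : seq V -> R) :=
  forall a u v s, (size s).+1 = N -> S ((a *: u + v) :: s) = a * S (u :: s) + S (v :: s).

Lemma SymF_cons N S y : SymF N.+1 S -> SymF N (fun s => S (y :: s)).
Proof. by move=> H s1 s2 hs p; apply: H; rewrite /= ?hs // perm_cons. Qed.

Lemma perm_swap2 (x y : V) s : perm_eq (x :: y :: s) (y :: x :: s).
Proof. by rewrite (perm_catCA [:: x] [:: y] s). Qed.

Lemma LinF_cons N S y : SymF N.+1 S -> LinF N.+1 S -> LinF N (fun s => S (y :: s)).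
Proof.
move=> HS HL a u v s hs /=.
rewrite (HS _ _ _ (perm_swap2 _ _ _)) /= ?hs // HL //.
by rewrite (HS (u :: y :: s) _ _ (perm_swap2 _ _ _)) /= ?hs //
   (HS (v :: y :: s) _ _ (perm_swap2 _ _ _)) /= ?hs.
by rewrite /= hs.
Qed.

Lemma binomF N S (y z : V) (t : R) : SymF N S -> LinF N S ->
  S (nseq N (y + t *: z)) =
  \sum_(k < N.+1) ('C(N, k)%:R * t ^+ k * S (nseq k z ++ nseq (N - k) y)).
Proof.
elim: N S => [|N IH] S HS HL.
  by rewrite big_ord1 /= bin0 expr0 !mul1r.
rewrite /= [X in S (X :: _)]addrC HL ?size_nseq //.
rewrite (IH (fun s => S (z :: s))); last 2 first.
- exact: SymF_cons. - exact: LinF_cons.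
rewrite (IH (fun s => S (y :: s))); last 2 first.
- exact: SymF_cons. - exact: LinF_cons.
have Ey : forall k : 'I_N.+1, S (y :: nseq k z ++ nseq (N - k) y) =
    S (nseq k z ++ nseq (N.+1 - k) y).
  move=> k; apply: HS; first by rewrite /= size_cat !size_nseq subnKC // -ltnS.
  rewrite (perm_catCA [:: y] (nseq k z) (nseq (N - k) y)) /= subSn //.
  by rewrite -ltnS.
rewrite [X in _ + X](eq_bigr (fun k : 'I_N.+1 => 'C(N, k)%:R * t ^+ k *
   S (nseq k z ++ nseq (N.+1 - k) y))); last by move=> k _; rewrite Ey.
rewrite [in RHS]big_ord_recl /=.
have E2 : forall i : 'I_N.+1, 'C(N.+1, bump 0 i)%:R * t ^+ bump 0 i *
     S (nseq (bump 0 i) z ++ nseq (N.+1 - bump 0 i) y) =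
   'C(N, i.+1)%:R * t ^+ i.+1 * S (nseq i.+1 z ++ nseq (N.+1 - i.+1) y) +
   t * ('C(N, i)%:R * t ^+ i * S (z :: nseq i z ++ nseq (N - i) y)).
  move=> i; rewrite /bump /= add0n add1n binS natrD.
  rewrite mulrDl mulrDl; congr (_ + _); rewrite exprS; ring.
rewrite (eq_bigr _ (fun i _ => E2 i)) big_split /= -mulr_sumr.
set A := t * _.
set D := \sum_(i < N.+1) 'C(N, i.+1)%:R * _ * _.
suff -> : \sum_(i < N.+1) 'C(N, i)%:R * t ^+ i * S (nseq i z ++ nseq (N.+1 - i) y)
   = 'C(N.+1, 0)%:R * t ^+ 0 * S (y :: nseq N y) + D by ring.
rewrite big_ord_recl /D big_ord_recr /= (bin_small (ltnSn N)) !bin0 mul0r mul0r addr0.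
congr (_ + _); apply: eq_bigr => i _; by rewrite /bump /= add0n add1n.
Qed.

Lemma poly_eq_ext (p q : {poly R}) : (forall t, p.[t] = q.[t]) -> p = q.
Proof.
move=> H; apply/eqP; rewrite -subr_eq0; apply/eqP.
set r := p - q.
have Hr : forall t, r.[t] = 0 by move=> t; rewrite hornerD hornerN H subrr.
apply/eqP; apply: contraT => nz.
have := @max_poly_roots _ r [seq i%:R | i <- iota 0 (size r)] nz.
rewrite size_map size_iota ltnn; apply.
  by apply/allP => x /mapP [i _ ->]; apply/rootP; apply: Hr.
rewrite map_inj_uniq ?iota_uniq //.
by move=> i j /eqP; rewrite eqr_nat => /eqP.
Qed.

Lemma polarF N S : SymF N S -> LinF N S -> (forall y, S (nseq N y) = 0) ->
  forall s, size s = N -> S s = 0.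
Proof.
elim: N S => [|N IH] S HS HL H0 s hs.
  by case: s hs => // _; apply: (H0 0).
case: s hs => // z s [hs].
apply: (IH (fun s => S (z :: s))) => //.
- exact: SymF_cons. - exact: LinF_cons.
move=> y.
pose p : {poly R} := \poly_(k < N.+2) ('C(N.+1, k)%:R * S (nseq k z ++ nseq (N.+1 - k) y)).
have p0 : p = 0.
  apply: poly_eq_ext => t; rewrite horner0 horner_poly.
  transitivity (S (nseq N.+1 (y + t *: z))); last exact: H0.
  rewrite binomF //; apply: eq_bigr => i _; by rewrite mulrAC.
have := congr1 (fun r : {poly R} => r`_1) p0.
rewrite coef_poly /= coef0 bin1 subSS subn0 /= => /eqP.
by rewrite mulf_eq0 pnatr_eq0 /= => /eqP.
Qed.

Lemma coef2_prod n (a g : 'I_n -> R) i0 : (forall i, i != i0 -> g i = 0) ->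
  (\prod_(i < n) ((a i)%:P + (g i)%:P * 'X))`_2 = 0.
Proof.
move=> Hg; rewrite (bigD1 i0) //=.
rewrite (eq_bigr (fun i => (a i)%:P)); last first.
  by move=> i /Hg ->; rewrite mul0r addr0.
rewrite -rmorph_prod /= coefMC coefD coefC /= coefMX /= coefC /=.
by rewrite add0r mul0r.
Qed.
End Alg.

Lemma vanish2 (R : realFieldType) d N (T : seq 'rV[R]_d -> R) (A : 'M[R]_(N.+2, d))
   (c : 'rV[R]_d) (g : 'I_N.+2 -> R) (i0 : 'I_N.+2) :
  SymF N.+2 T -> LinF N.+2 T ->
  (forall y, T (nseq N.+2 y) = (N.+2)`!%:R * \prod_(i < N.+2) \sum_(j < d) A i j * y 0 j) ->
  (forall i, \sum_(j < d) A i j * c 0 j = g i) -> (forall i, i != i0 -> g i = 0) ->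
  forall s, size s = N -> T (c :: c :: s) = 0.
Proof.
move=> HS HL HT Hc Hg.
have HS1 := SymF_cons c HS; have HL1 := LinF_cons c HS HL.
apply: (polarF (SymF_cons c HS1) (LinF_cons c HS1 HL1)) => y.
pose p : {poly R} := \poly_(k < N.+3)
   ('C(N.+2, k)%:R * T (nseq k c ++ nseq (N.+2 - k) y)).
pose q : {poly R} := ((N.+2)`!%:R)%:P *
   \prod_(i < N.+2) ((\sum_(j < d) A i j * y 0 j)%:P + (g i)%:P * 'X).
have pq : p = q.
  apply: poly_eq_ext => t.
  rewrite horner_poly.
  transitivity (T (nseq N.+2 (y + t *: c))).
    rewrite binomF //; apply: eq_bigr => i _; by rewrite mulrAC.
  rewrite HT hornerCM horner_prod; congr (_ * _); apply: eq_bigr => i _.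
  rewrite hornerD hornerC hornerMX hornerC -(Hc i) mulr_suml -big_split /=.
  apply: eq_bigr => j _; rewrite !mxE; ring.
have := congr1 (fun r : {poly R} => r`_2) pq.
rewrite coef_poly /= coefCM (coef2_prod _ Hg) mulr0 !subSS subn0 /= => /eqP.
rewrite mulf_eq0 pnatr_eq0 => /orP [|/eqP //].
by rewrite -leqn0 leqNgt bin_gt0.
Qed.

Lemma sum4 (R : nzRingType) (T : Type) (ls : seq T) d (F : 'I_d -> 'I_d -> 'I_d -> T -> R) :
  \sum_(i < d) \sum_(j < d) \sum_(l < d) \sum_(p <- ls) F i j l p =
  \sum_(l < d) \sum_(p <- ls) \sum_(i < d) \sum_(j < d) F i j l p.
Proof.
transitivity (\sum_(i < d) \sum_(l < d) \sum_(j < d) \sum_(p <- ls) F i j l p).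
  by apply: eq_bigr => i _; rewrite exchange_big.
rewrite exchange_big; apply: eq_bigr => l _.
rewrite [RHS]exchange_big; apply: eq_bigr => i _.
by rewrite exchange_big.
Qed.

Lemma dual_basis (R : fieldType) n d (A : 'M[R]_(n, d)) (i0 : 'I_d) :
  row_free A -> exists (M : 'M[R]_d) (b : 'I_d -> R),
    \det M = 1 /\ forall i l, (A *m M) i l = ((i : nat) == l)%:R * b l.
Proof.
move=> rf; have rA : \rank A = n by apply/eqP.
have nd : (n <= d)%N by rewrite -rA rank_leq_col.
set E := col_ebase A; set U := row_ebase A.
have eA := mulmx_ebase A; rewrite rA -/E -/U in eA; symmetry in eA.
pose p1 : 'M[R]_(n, d) := pid_mx n.
pose p2 : 'M[R]_(d, n) := pid_mx n.
pose c : 'M[R]_d := copid_mx n.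
have h1 : p1 *m p2 = 1%:M by rewrite /p1 /p2 pid_mx_id // pid_mx_1.
have h2 : p1 *m c = 0 by rewrite /p1 /c mul_pid_mx_copid.
have h3 : c *m p2 = 0 by rewrite /p2 /c mul_copid_mx_pid.
have h4 : c *m c = c by rewrite /c copid_mx_id.
have h5 : p2 *m p1 + c = 1%:M.
  by rewrite /p1 /p2 /c pid_mx_id // /copid_mx addrC subrK.
have hp1 : forall (i : 'I_n) (l : 'I_d), p1 i l = ((i : nat) == l)%:R.
  by move=> i l; rewrite /p1 mxE ltn_ord andbT.
have eA1 : A = E *m p1 *m U by rewrite eA.
clearbody p1 p2 c.
have Eu : E \in unitmx by apply: col_ebase_unit.
have Uu : U \in unitmx by apply: row_ebase_unit.
pose F : 'M[R]_d := p2 *m E *m p1 + c.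
pose G : 'M[R]_d := p2 *m invmx E *m p1 + c.
have FG : F *m G = 1%:M.
  rewrite /F /G mulmxDl !mulmxDr -!mulmxA h2 !mulmx0 addr0.
  rewrite (mulmxA p1 p2) h1 mul1mx (mulmxA E) mulmxV // mul1mx.
  by rewrite (mulmxA c) h3 mul0mx add0r h4.
have [_ Gu] := mulmx1_unit FG.
pose M0 := invmx U *m G.
have M0u : M0 \in unitmx by rewrite unitmx_mul unitmx_inv Uu Gu.
have AM0 : A *m M0 = p1.
  rewrite eA1 /M0 -!mulmxA (mulmxA U) mulmxV // mul1mx /G mulmxDr -!mulmxA h2.
  by rewrite (mulmxA p1) h1 mul1mx addr0 (mulmxA E) mulmxV // mul1mx.
have d0 : \det M0 != 0 by rewrite -unitfE -unitmxE.
pose b : 'rV[R]_d := \row_l (if l == i0 then (\det M0)^-1 else 1).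
exists (M0 *m diag_mx b), (fun l => b 0 l); split.
  rewrite det_mulmx det_diag (bigD1 i0) //= big1 => [|l /negPf nl].
    by rewrite mxE eqxx mulr1 mulfV.
  by rewrite mxE nl.
move=> i l; rewrite mulmxA AM0 mul_mx_diag mxE hp1.
by [].
Qed.

Section Ana.
Variables (R : realType) (d : nat).
Local Notation V := 'rV[R]_d.

Lemma derive_line (h : V -> R) (w p : V) (t : R) :
  derivable h (p + t *: w) w ->
  is_derive t 1 (fun r : R => h (p + r *: w)) ('D_w h (p + t *: w)).
Proof.
move=> dh.
have E : (fun s : R => s^-1 *: (((fun r : R => h (p + r *: w)) \o shift t) (s *: 1)
            - h (p + t *: w))) =
         (fun s : R => s^-1 *: ((h \o shift (p + t *: w)) (s *: w) - h (p + t *: w))).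
  apply/funext => s /=; congr (_ *: (_ - _)); congr h.
  by rewrite -[s%:A]/(s * 1) mulr1 scalerDl addrCA.
apply: DeriveDef; first by rewrite /derivable E.
by rewrite /derive E.
Qed.

Lemma derive_lin (h : V -> R) x (a : R) u v : differentiable h x ->
  'D_(a *: u + v) h x = a * 'D_u h x + 'D_v h x.
Proof. by move=> dh; rewrite !deriveE // linearD linearZ. Qed.

Lemma derive_linsum (h : V -> R) x k (c : 'I_k -> R) (w : 'I_k -> V) :
  differentiable h x ->
  'D_(\sum_(i < k) c i *: w i) h x = \sum_(i < k) c i * 'D_(w i) h x.
Proof.
move=> dh; rewrite deriveE // linear_sum; apply: eq_bigr => i _.
by rewrite linearZ -deriveE.
Qed.


Lemma mvt_line (h : V -> R) (w p : V) (s : R) : 0 < s ->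
  (forall y, derivable h y w) ->
  exists2 c, 0 < c < s & h (p + s *: w) - h p = 'D_w h (p + c *: w) * s.
Proof.
move=> s0 dh.
have D : forall r : R, is_derive r 1 (fun r : R => h (p + r *: w)) ('D_w h (p + r *: w)).
  by move=> r; apply: derive_line.
have [c cI E] := @MVT R (fun r : R => h (p + r *: w)) (fun r => 'D_w h (p + r *: w))
   0 s s0 (fun r _ => D r)
   (derivable_within_continuous (fun r _ => (let: DeriveDef h _ := D r in h))).
exists c; first by move: cI; rewrite in_itv.
by move: E; rewrite scale0r addr0 subr0.
Qed.

Lemma delta_mvt (g : V -> R) (u v x : V) (s : R) : 0 < s ->
  (forall y, differentiable g y) -> (forall y, differentiable ('D_u g) y) ->
  exists a b : R, [/\ 0 <= a <= s, 0 <= b <= s &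
   g (x + s *: u + s *: v) - g (x + s *: u) - g (x + s *: v) + g x =
     s * s * 'D_v ('D_u g) (x + a *: u + b *: v)].
Proof.
move=> s0 dg dDg.
pose phi : R -> R := (fun r : R => g (x + s *: v + r *: u)) - (fun r : R => g (x + r *: u)).
have D : forall r : R, is_derive r 1 phi
    ('D_u g (x + s *: v + r *: u) - 'D_u g (x + r *: u)).
  move=> r; apply: is_deriveB; apply: derive_line; exact: diff_derivable.
have [c cI E] := @MVT R phi
   (fun r => 'D_u g (x + s *: v + r *: u) - 'D_u g (x + r *: u))
   0 s s0 (fun r _ => D r)
   (derivable_within_continuous (fun r _ => (let: DeriveDef h _ := D r in h))).
have [e eI E2] := @mvt_line ('D_u g) v (x + c *: u) s s0 (fun y => diff_derivable (dDg y)).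
exists c, e; move: cI eI; rewrite in_itv /= => /andP[c0 cs] /andP[e0 es].
split; rewrite ?ltW //.
have E1 : (g (x + s *: v + s *: u) - g (x + s *: u)) -
   (g (x + s *: v + 0 *: u) - g (x + 0 *: u)) =
   ('D_u g (x + s *: v + c *: u) - 'D_u g (x + c *: u)) * (s - 0) := E.
move: E1; rewrite !scale0r !addr0 subr0 (addrAC x (s *: v) (c *: u)) E2.
move=> E1; rewrite (addrAC x (s *: u) (s *: v)).
transitivity ((g (x + s *: v + s *: u) - g (x + s *: u)) - (g (x + s *: v) - g x)).
  by ring.
rewrite E1; ring.
Qed.

Lemma cont_eps (h : V -> R) (x : V) (e : R) : continuous h -> 0 < e ->
  exists2 r, 0 < r & forall y, `|x - y| < r -> `|h x - h y| < e.
Proof.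
move=> ch e0; have := @cvgr_dist_lt _ _ _ _ _ h (h x) (ch x) e e0.
move=> Hn; have [r r0 H] := proj1 (nbhs_ballP _ _) (Hn _); exists r => // y xy; apply: H.
by rewrite -ball_normE /ball_ /=.
Qed.

Lemma fin3 (X Y W : R) : `|X - W| < `|X - Y| / 3 ->
    `|Y - W| < `|X - Y| / 3 -> X != Y -> False.
Proof.
  move=> l1 l2 nXY.
  have t : `|X - Y| <= `|X - W| + `|Y - W|.
    have -> : X - Y = (X - W) + (W - Y) by rewrite addrA subrK.
    by rewrite (distrC Y W); apply: ler_normD.
  have : 0 < `|X - Y| by rewrite normr_gt0 subr_eq0.
  lra.
Qed.

Lemma schwarz (g : V -> R) (u v x : V) :
  (forall y, differentiable g y) -> (forall y, differentiable ('D_u g) y) ->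
  (forall y, differentiable ('D_v g) y) ->
  continuous ('D_v ('D_u g)) -> continuous ('D_u ('D_v g)) ->
  'D_v ('D_u g) x = 'D_u ('D_v g) x.
Proof.
move=> dg du dv c1 c2.
set h1 := 'D_v ('D_u g); set h2 := 'D_u ('D_v g).
apply/eqP; apply: contraT => ne.
set e := `|h1 x - h2 x| / 3.
have e0 : 0 < e by rewrite divr_gt0 // normr_gt0 subr_eq0.
have [r1 r10 H1] := cont_eps x c1 e0.
have [r2 r20 H2] := cont_eps x c2 e0.
set r := Num.min r1 r2.
have r0 : 0 < r by rewrite lt_min r10 r20.
set K := `|u| + `|v| + 1.
have K0 : 0 < K by rewrite /K ltr_wpDl // addr_ge0.
set s := r / (2 * K).
have s0 : 0 < s by rewrite divr_gt0 // mulr_gt0.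
have sK : s * K < r.
  have -> : s * K = r / 2.
    by rewrite /s invfM -!mulrA mulVf ?gt_eqF // mulr1.
  by rewrite ltr_pdivrMr // ltr_pMr // ltr1n.
have bound : forall a b, 0 <= a <= s -> 0 <= b <= s ->
    `|x - (x + a *: u + b *: v)| < r.
  move=> a b /andP[a0 aS] /andP[b0 bS].
  rewrite -addrA opprD addrA subrr add0r normrN.
  apply: le_lt_trans (ler_normD _ _) _; rewrite !normrZ !ger0_norm //.
  apply: le_lt_trans sK; rewrite /K !mulrDr mulr1.
  apply: le_trans (_ : _ <= s * `|u| + s * `|v|) _; last by rewrite lerDl ltW.
  by apply: lerD; apply: ler_wpM2r.
have [a [b [aI bI E1]]] := @delta_mvt g u v x s s0 dg du.
have [a' [b' [aI' bI' E2]]] := @delta_mvt g v u x s s0 dg dv.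
have E : h1 (x + a *: u + b *: v) = h2 (x + b' *: u + a' *: v).
  have ss : s * s != 0 by rewrite mulf_neq0 // gt_eqF.
  have M : g (x + s *: u + s *: v) - g (x + s *: u) - g (x + s *: v) + g x =
           g (x + s *: v + s *: u) - g (x + s *: v) - g (x + s *: u) + g x.
    by rewrite (addrAC x (s *: v)); congr (_ + _); exact: addrAC.
  have E3 := etrans (esym E1) (etrans M E2).
  have E4 := mulfI ss E3.
  rewrite (addrAC x (b' *: u)).
  exact: E4.
have rr1 : r <= r1 by rewrite /r ge_min lexx.
have rr2 : r <= r2 by rewrite /r ge_min lexx orbT.
have L1 := H1 _ (lt_le_trans (bound _ _ aI bI) rr1).
have L2 := H2 _ (lt_le_trans (bound _ _ bI' aI') rr2).
have L2' : `|h2 x - h1 (x + a *: u + b *: v)| < e :=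
  eq_rect _ (fun w => `|h2 x - w| < e) L2 _ (esym E).
have [] := @fin3 (h1 x) (h2 x) (h1 (x + a *: u + b *: v)) L1 L2' ne.
Qed.




End Ana.

Section F.
Variables (R : realType) (d n : nat) (f : 'rV[R]_d -> R).
Local Notation V := 'rV[R]_d.
Hypothesis Hd : forall vs : seq V, (size vs < n)%N -> forall x, differentiable (iterDir f vs) x.
Hypothesis Hc : forall vs : seq V, (size vs <= n)%N -> continuous (iterDir f vs).

Lemma iterDir_cons v s : iterDir f (v :: s) = 'D_v (iterDir f s).
Proof. by []. Qed.

Lemma swap2 (u v : V) s : (size s + 2 <= n)%N ->
  iterDir f (u :: v :: s) = iterDir f (v :: u :: s).
Proof.
move=> hs; apply/funext => x; rewrite !iterDir_cons.
apply: (@schwarz R d (iterDir f s) v u x).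
- by apply: Hd; rewrite (leq_trans _ hs) // addn2 ltnW.
- by apply: (Hd (vs := v :: s)); rewrite /= (leq_trans _ hs) // addn2.
- by apply: (Hd (vs := u :: s)); rewrite /= (leq_trans _ hs) // addn2.
- by apply: (Hc (vs := u :: v :: s)); rewrite /= -addn2.
- by apply: (Hc (vs := v :: u :: s)); rewrite /= -addn2.
Qed.

Lemma move_front (x : V) t1 t2 : (size t1 + size t2 < n)%N ->
  iterDir f (x :: t1 ++ t2) = iterDir f (t1 ++ x :: t2).
Proof.
elim: t1 => [//|y t1 IH] /= hs.
transitivity (iterDir f (x :: y :: t1 ++ t2)); first by [].
rewrite swap2; last by rewrite size_cat addn2 -addSn.
by rewrite iterDir_cons IH // ltnW.
Qed.

Lemma perm_iterDir (s1 s2 : seq V) : (size s1 <= n)%N -> perm_eq s1 s2 ->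
  iterDir f s1 = iterDir f s2.
Proof.
elim: s1 s2 => [|x s1 IH] s2 hs p.
  by move: (perm_size p); case: s2 p.
have xs2 : x \in s2 by rewrite -(perm_mem p) mem_head.
case/splitPr: s2 / xs2 p => t1 t2 p.
have p' : perm_eq s1 (t1 ++ t2).
  by rewrite -(perm_cons x); apply: (perm_trans p); rewrite perm_sym -cat1s perm_catCA.
rewrite iterDir_cons (IH _ (ltnW hs) p') -iterDir_cons move_front //.
by rewrite -size_cat -(perm_size p').
Qed.

Lemma iterDir_consE v s x : iterDir f (v :: s) x = 'D_v (iterDir f s) x.
Proof. by []. Qed.

Lemma SymT theta : SymF n (fun s => iterDir f s theta).
Proof. by move=> s1 s2 hs p; rewrite (perm_iterDir _ p) // hs. Qed.

Lemma LinT theta : LinF n (fun s => iterDir f s theta).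
Proof.
move=> a u v s hs /=; rewrite derive_lin //.
by apply: Hd; rewrite -hs.
Qed.

Definition SumF (ls : seq (R * seq V)) : V -> R :=
  fun x => \sum_(p <- ls) p.1 * iterDir f p.2 x.

Lemma is_derive_SumF (w x : V) ls : (forall p, p \in ls -> (size p.2 < n)%N) ->
  is_derive x w (SumF ls) (\sum_(p <- ls) p.1 * iterDir f (w :: p.2) x).
Proof.
elim: ls => [|p ls IH] hs.
  have -> : SumF [::] = cst 0 by apply/funext => y; rewrite /SumF big_nil.
  by rewrite big_nil; apply: is_derive_cst.
have -> : SumF (p :: ls) = (p.1 \*: iterDir f p.2) + SumF ls.
  by apply/funext => y; rewrite /SumF big_cons.
rewrite big_cons; apply: is_deriveD; last first.
  by apply: IH => p' hp'; apply: hs; rewrite in_cons hp' orbT.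
apply: is_deriveZ; apply: derivableP; apply: diff_derivable.
by apply: Hd; apply: hs; rewrite mem_head.
Qed.

Lemma derive_SumF (w x : V) ls : (forall p, p \in ls -> (size p.2 < n)%N) ->
  'D_w (SumF ls) x = \sum_(p <- ls) p.1 * iterDir f (w :: p.2) x.
Proof. by move=> hs; have := is_derive_SumF w x hs => -[_ ->]. Qed.

Variable M : 'M[R]_d.
Definition cvec (l : 'I_d) : V := \row_j M j l.

Lemma D_lin_c (h : V -> R) l x : differentiable h x ->
  'D_(cvec l) h x = \sum_(j < d) M j l * 'D_(stdbasis R j) h x.
Proof.
move=> dh; rewrite {1}(row_sum_delta (cvec l)) derive_linsum //.
by apply: eq_bigr => j _; rewrite mxE.
Qed.

Lemma cc_expand l s x : (size s + 2 <= n)%N ->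
  iterDir f (cvec l :: cvec l :: s) x =
  \sum_(i < d) \sum_(j < d) (M i l * M j l) *
     iterDir f (stdbasis R i :: stdbasis R j :: s) x.
Proof.
move=> hs.
have h1 : (size s < n)%N by rewrite (leq_trans _ hs) // addn2 ltnW.
have h2 : forall v : V, (size (v :: s) < n)%N by move=> v; rewrite /= (leq_trans _ hs) // addn2.
rewrite iterDir_consE D_lin_c; last exact: Hd.
apply: eq_bigr => i _.
rewrite -iterDir_consE swap2 // iterDir_consE D_lin_c; last exact: Hd.
rewrite mulr_sumr; apply: eq_bigr => j _.
by rewrite -iterDir_consE swap2 // mulrA.
Qed.

Definition Lstep (ls : seq (R * seq V)) : seq (R * seq V) :=
  flatten [seq [seq (p.1, cvec l :: cvec l :: p.2) | p <- ls] | l <- index_enum 'I_d].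

Lemma mem_Lstep p ls : p \in Lstep ls ->
  exists l p', p' \in ls /\ p = (p'.1, cvec l :: cvec l :: p'.2).
Proof. by move=> /flatten_mapP [l _ /mapP [p' p'in ->]]; exists l, p'. Qed.

Lemma L_SumF ls : (forall p, p \in ls -> (size p.2 + 2 <= n)%N) ->
  ellipticLap (M *m M^T) (SumF ls) = SumF (Lstep ls).
Proof.
move=> hs; apply/funext => x.
have hs1 : forall p, p \in ls -> (size p.2 < n)%N.
  by move=> p /hs h; rewrite (leq_trans _ h) // addn2 ltnW.
have hs2 : forall (j : 'I_d) p, p \in [seq (p.1, stdbasis R j :: p.2) | p <- ls] ->
    (size p.2 < n)%N.
  by move=> j p /mapP [p' /hs p'in ->] /=; rewrite (leq_trans _ p'in) // addn2.
have Dj : forall j, 'D_(stdbasis R j) (SumF ls) =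
    SumF [seq (p.1, stdbasis R j :: p.2) | p <- ls].
  by move=> j; apply/funext => y; rewrite derive_SumF // /SumF big_map.
rewrite /ellipticLap.
pose X (i j : 'I_d) (p : R * seq V) := iterDir f (stdbasis R i :: stdbasis R j :: p.2) x.
pose a (i j l : 'I_d) := M i l * M j l.
transitivity (\sum_(i < d) \sum_(j < d) \sum_(l < d) \sum_(p <- ls) a i j l * (p.1 * X i j p)).
  apply: eq_bigr => i _; apply: eq_bigr => j _.
  rewrite Dj (derive_SumF _ _ (hs2 j)) big_map /= mxE mulr_suml.
  apply: eq_bigr => l _; rewrite mulr_sumr; apply: eq_bigr => p _.
  by rewrite mxE.
rewrite /SumF /Lstep big_flatten /= big_map.
transitivity (\sum_(l < d) \sum_(p <- ls) \sum_(i < d) \sum_(j < d) a i j l * (p.1 * X i j p)); last first.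
  apply: eq_bigr => l _; rewrite big_map; apply: eq_big_seq => p hp /=.
  have -> : 'D_(cvec l) ('D_(cvec l) (iterDir f p.2)) x =
    iterDir f (cvec l :: cvec l :: p.2) x by [].
  rewrite cc_expand; last by apply: hs.
  rewrite mulr_sumr; apply: eq_bigr => i _; rewrite mulr_sumr; apply: eq_bigr => j _.
  by rewrite /a /X; ring.
exact: (sum4 ls (fun i j l p => a i j l * (p.1 * X i j p))).
Qed.

Definition init : seq (R * seq V) := [:: (1, [::])].

Lemma iterL j : (2 * j < n)%N ->
  iter j (ellipticLap (M *m M^T)) f = SumF (iter j Lstep init) /\
  forall p, p \in iter j Lstep init -> size p.2 = (2 * j)%N.
Proof.
elim: j => [|j IH] hj.
  split; last by move=> p; rewrite inE => /eqP ->.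
  by apply/funext => x; rewrite /SumF /= big_seq1 mul1r.
have hj' : (2 * j + 2 < n)%N by rewrite -mulnSr.
have [E S] := IH (leq_ltn_trans (leq_addr 2 _) hj').
split.
  rewrite iterS E L_SumF ?iterS // => p /S ->.
  exact: ltnW.
move=> p; rewrite iterS => /mem_Lstep [l [p' [p'in ->]]] /=.
by rewrite S // mulnSr addn2.
Qed.

End F.

Unset Implicit Arguments. Set Strict Implicit.

Theorem proposition2 (R : realType) (q d : nat) (f : 'rV[R]_d -> R)
    (theta : 'rV[R]_d) (A : 'M[R]_(q.+1, d)) :
  ~~ odd q -> (2 <= q)%N -> (q.+1 <= d)%N ->
  (forall x, 0 <= f x) ->
  (forall x, f x <= f theta) ->
  smooth_upto f q.+1 ->
  (forall y : 'rV[R]_d,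
     iterDir f (nseq q.+1 y) theta / (q.+1)`!%:R
     = \prod_(i < q.+1) \sum_(j < d) A i j * y 0 j) ->
  row_free A ->
  exists P : 'M[R]_d, `|\det P| = 1 /\
    forall k : 'I_d,
      'D_(delta_mx 0 k : 'rV[R]_d) (iter (q %/ 2) (ellipticLap (QofP P)) f) theta = 0.
Proof.
move=> qe q2 qd _ _ [Hd Hc] Hy rf.
case: q A qe q2 qd Hd Hc Hy rf => [//|N] A qe q2 qd Hd Hc Hy rf.
have d0 : (0 < d)%N by rewrite (leq_trans _ qd).
have [M [b [detM AM]]] := dual_basis (Ordinal d0) rf.
have Mu : M \in unitmx by rewrite unitmxE detM unitr1.
exists (invmx M); split; first by rewrite det_inv detM invr1 normr1.
have -> : QofP (invmx M) = M *m M^T by rewrite /QofP invmxK.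
move=> k.
have [m' Em] : exists m', (N.+1 %/ 2 = m'.+1)%N.
  by exists (N.+1 %/ 2).-1; rewrite prednK // divn_gt0.
have qm : N.+1 = (2 * m'.+1)%N.
  by rewrite -Em divn2 -[LHS]odd_double_half (negPf qe) add0n -mul2n.
rewrite Em.
have hm : (2 * m'.+1 < N.+2)%N by rewrite -qm.
have [E S] := @iterL R d N.+2 f Hd Hc M m'.+1 hm.
rewrite E (@derive_SumF R d N.+2 f Hd) //; last by move=> p /S ->; rewrite -qm.
apply: big1_seq => p /andP[_ pin].
rewrite iterS in pin.
have [l [p' [p'in pE]]] := mem_Lstep pin.
have hm' : (2 * m' < N.+2)%N by lia.
have [_ S'] := @iterL R d N.+2 f Hd Hc M m' hm'.
have Sp := S' p' p'in.
have NE : N = (2 * m').+1 by lia.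
rewrite pE; change (p'.1 * iterDir f ('e_k :: cvec M l :: cvec M l :: p'.2) theta = 0).
suff -> : iterDir f ('e_k :: cvec M l :: cvec M l :: p'.2) theta = 0 by rewrite mulr0.
rewrite (@perm_iterDir R d N.+2 f Hd Hc _ (cvec M l :: cvec M l :: 'e_k :: p'.2)); last 2 first.
- by rewrite /= Sp NE.
- by apply/permP => P /=; rewrite addnCA; congr (_ + _); exact: addnCA.
apply: (@vanish2 R d N (fun s => iterDir f s theta) A (cvec M l)
   (fun i => (A *m M) i l) (inord l)).
- exact: SymT.
- exact: LinT.
- move=> y; rewrite -Hy mulrC divfK //.
- by move=> i; rewrite mxE; apply: eq_bigr => j _; rewrite mxE.
- move=> i ni; rewrite AM; case: eqP => [h|]; last by rewrite mul0r.
  by move: ni; rewrite (_ : i = inord l) ?eqxx //; apply: val_inj; rewrite /= inordK // -h.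
- by rewrite /= Sp NE.
Qed.
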